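(* Let $V$ be a space. The following are equivalent: (i) $V$ is homothetic to $\langle 1,\tau\rangle_{\mathbb{Q}}$ for some $\tau$ with $|\tau|=1$; (ii) $V$ is homothetic to $\langle 1,\tau\rangle_{\mathbb{Q}}$ for some nonzero purely imaginary $\tau$; (iii) $V$ is homothetic to a space $V'$ with $V'=\overline{V'}$.
   Context: A space is a $2$-dimensional $\mathbb{Q}$-vector subspace $V\subset\mathbb{C}$ containing two $\mathbb{R}$-linearly independent vectors; $\langle 1,\tau\rangle_{\mathbb{Q}}=\mathbb{Q}+\mathbb{Q}\tau$. Spaces $V_1,V_2$ are homothetic if $V_2=\lambda V_1$ for some $\lambda\in\mathbb{C}^*$. $\overline{V}$ denotes the complex conjugate of $V$. *)

(* Defs.v *)
From HB Require Import structures.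
From mathcomp Require Import all_boot all_order all_algebra.
From mathcomp Require Import complex.
From mathcomp Require Import boolp classical_sets reals.
Set Implicit Arguments. Unset Strict Implicit. Unset Printing Implicit Defensive.
Import Order.TTheory GRing.Theory Num.Theory.
Local Open Scope ring_scope.
Local Open Scope classical_set_scope.

Section Spaces.
Variable R : realType.
Local Notation C := R[i].

Definition qspan (u v : C) : set C :=
  [set z | exists a b : rat, z = ratr a * u + ratr b * v].

Definition Q_indep (u v : C) : Prop :=
  forall a b : rat, ratr a * u + ratr b * v = 0 -> a = 0 /\ b = 0.

Definition R_indep (u v : C) : Prop :=
  forall a b : R, (a%:C)%C * u + (b%:C)%C * v = 0 -> a = 0 /\ b = 0.

(* A space: a 2-dimensional Q-vector subspace of C (i.e. the Q-span of two
   Q-linearly independent vectors) containing two R-linearly independent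
   vectors. *)
Definition is_space (V : set C) : Prop :=
  (exists u v : C, Q_indep u v /\ V = qspan u v) /\
  (exists u v : C, V u /\ V v /\ R_indep u v).

Definition homothetic (V1 V2 : set C) : Prop :=
  exists lambda : C, lambda != 0 /\ V2 = (fun z => lambda * z) @` V1.

Definition conj_set (V : set C) : set C := (fun z => z^*)%C @` V.

End Spaces.

(* Main.v *)
Require Import Defs.
From HB Require Import structures.
From mathcomp Require Import all_boot all_order all_algebra.
From mathcomp Require Import complex.
From mathcomp Require Import boolp classical_sets reals.
From mathcomp Require Import ring lra.
Import Order.TTheory GRing.Theory Num.Theory.
Local Open Scope ring_scope.
Local Open Scope classical_set_scope.
Section S.
Variable R : realType.
Local Notation C := R[i].
Lemma ratrC (a : rat) : (ratr a : C) = ((ratr a : R)%:C)%C.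
Proof. by rewrite fmorph_rat. Qed.
Lemma conj_ratr (a : rat) : ((ratr a : C)^*)%C = ratr a.
Proof. by rewrite fmorph_rat. Qed.
Lemma L11 (al : R) (x : C) : (x^*)%C = (al%:C)%C * x ->
  (al = 1 -> x = 1 * ((complex.Re x)%:C)%C) /\ (al != 1 -> x = 'i%C * ((complex.Im x)%:C)%C).
Proof.
case: x => x1 x2 /=; simpc => /eqP; rewrite eq_complex /= => /andP[/eqP h1 /eqP h2].
split.
  move=> ha; subst al; apply/eqP; rewrite eq_complex /= eqxx /=.
  apply/eqP; lra.
move=> ha; simpc; apply/eqP; rewrite eq_complex /= eqxx andbT.
have : x1 * (1 - al) = 0 by lra.
have hal : (1 - al) != 0 by rewrite subr_eq0 eq_sym.
by move/eqP; rewrite mulf_eq0 (negbTE hal) orbF.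
Qed.

Lemma qspan_img (l u v : C) : (fun z => l * z) @` qspan u v = qspan (l * u) (l * v).
Proof.
apply/seteqP; split => z.
  by case=> w [a [b ->]] <-; exists a, b; ring.
by case=> a [b ->]; exists (ratr a * u + ratr b * v); [exists a, b | ring].
Qed.

Lemma img_comp (l m : C) (S : set C) :
  (fun z => l * z) @` ((fun z => m * z) @` S) = (fun z => (l * m) * z) @` S.
Proof.
apply/seteqP; split => z.
  by case=> w [y Sy <-] <-; exists y => //; ring.
by case=> y Sy <-; exists (m * y); [exists y | ring].
Qed.

Lemma qspan_change (u v : C) (p q r s : rat) : p * s - q * r != 0 ->
  qspan (ratr p * u + ratr q * v) (ratr r * u + ratr s * v) = qspan u v.
Proof.
move=> hD; apply/seteqP; split => z.
  case=> a [b ->]; exists (a * p + b * r), (a * q + b * s).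
  rewrite !rmorphD !rmorphM /=; ring.
case=> a [b ->].
pose x := (a * s - r * b) / (p * s - q * r).
pose y := (p * b - q * a) / (p * s - q * r).
exists x, y.
have ha : a = x * p + y * r by rewrite /x /y; field.
have hb : b = x * q + y * s by rewrite /x /y; field.
rewrite {1}ha {1}hb !rmorphD !rmorphM /=; ring.
Qed.

Lemma Q_indep_scale (m u v : C) : m != 0 -> Q_indep u v -> Q_indep (m * u) (m * v).
Proof.
move=> hm hQ a b h; apply: hQ.
apply: (mulfI hm); rewrite mulr0 -h; ring.
Qed.

Lemma R_indep_scale (m u v : C) : m != 0 -> R_indep u v -> R_indep (m * u) (m * v).
Proof.
move=> hm hQ a b h; apply: hQ.
apply: (mulfI hm); rewrite mulr0 -h; ring.
Qed.

Lemma space_scale (m : C) (V : set C) : m != 0 -> is_space V ->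
  is_space ((fun z => m * z) @` V).
Proof.
move=> hm [[u [v [hQ ->]]] [x [y [Vx [Vy hR]]]]]; split.
  by exists (m * u), (m * v); split; [exact: Q_indep_scale | exact: qspan_img].
exists (m * x), (m * y); split; first by exists x.
by split; [exists y | exact: R_indep_scale].
Qed.

Lemma space_homothetic (l : C) (V W : set C) : l != 0 -> is_space V ->
  V = (fun z => l * z) @` W -> is_space W.
Proof.
move=> hl hV hVW.
have -> : W = (fun z => l^-1 * z) @` V.
  by rewrite hVW img_comp mulVf // ; apply/seteqP; split => z;
    [move=> Wz; exists z => //; rewrite mul1r | case=> y Wy <-; rewrite mul1r].
by apply: space_scale => //; rewrite invr_eq0.
Qed.

Lemma no_Rindep (l x y : C) (r1 r2 : R) : x = l * (r1%:C)%C -> y = l * (r2%:C)%C ->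
  ~ R_indep x y.
Proof.
move=> -> -> hR.
have [r10|r1n0] := eqVneq r1 0.
  have [] := hR 1 0; last by move=> /eqP; rewrite oner_eq0.
  by rewrite r10 !rmorph0 !rmorph1 /=; ring.
have [] := hR r2 (- r1); last by move=> _ /eqP; rewrite oppr_eq0 (negbTE r1n0).
by rewrite rmorphN /=; ring.
Qed.


Lemma conj_ratrM (a : rat) (u : C) : ((ratr a * u)^*)%C = ratr a * (u^*)%C.
Proof. by rewrite rmorphM /= conj_ratr. Qed.

Lemma conj_qspan (u v : C) : conj_set (qspan u v) = qspan (u^*)%C (v^*)%C.
Proof.
apply/seteqP; split => z.
  case=> w [a [b ->]] <-; exists a, b.
  by rewrite rmorphD /= !conj_ratrM.
case=> a [b ->]; exists (ratr a * u + ratr b * v); first by exists a, b.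
by rewrite rmorphD /= !conj_ratrM.
Qed.

Lemma ratr_lin (a b : rat) (t : R) :
  ratr a + ratr b * (t%:C)%C = ((ratr a + ratr b * t)%:C)%C :> C.
Proof. by rewrite !ratrC /=; simpc. Qed.

Lemma not_space_real (t : R) : ~ is_space (qspan 1 (t%:C)%C).
Proof.
move=> [_ [x [y [[a [b hx]] [[c [d hy]] hR]]]]].
apply: (@no_Rindep 1 x y (ratr a + ratr b * t) (ratr c + ratr d * t) _ _ hR).
  by rewrite hx mul1r mulr1 ratr_lin.
by rewrite hy mul1r mulr1 ratr_lin.
Qed.

Lemma key (w mu : C) (V V' : set C) : w != 0 -> mu != 0 ->
  qspan w (w^*)%C = V' -> V = (fun z => mu * z) @` V' ->
  exists tau : C, `|tau| = 1 /\ homothetic (qspan 1 tau) V.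
Proof.
move=> hw hmu hV' hV.
exists ((w^*)%C / w); split.
  by rewrite normrM normrV ?unitfE // normcJ divff // normr_eq0.
exists (mu * w); split; first by rewrite mulf_neq0.
rewrite hV -img_comp qspan_img mulr1 mulrC divfK //.
by rewrite hV'.
Qed.

End S.
Arguments ratrC {R}.
Arguments conj_ratr {R}.
Arguments L11 {R}.
Arguments qspan_img {R}.
Arguments img_comp {R}.
Arguments qspan_change {R}.
Arguments Q_indep_scale {R}.
Arguments R_indep_scale {R}.
Arguments space_scale {R}.
Arguments space_homothetic {R}.
Arguments no_Rindep {R}.
Arguments conj_ratrM {R}.
Arguments conj_qspan {R}.
Arguments ratr_lin {R}.
Arguments not_space_real {R}.
Arguments key {R}.

Theorem lemma4p1 (R : realType) (V : set R[i]) (hV : is_space V) :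
  [<-> (exists tau : R[i], `|tau| = 1 /\ homothetic (qspan 1 tau) V);
       (exists tau : R[i], tau != 0 /\ complex.Re tau = 0 /\
                           homothetic (qspan 1 tau) V);
       (exists V' : set R[i], is_space V' /\ V' = conj_set V' /\
                              homothetic V' V)].
Proof.
tfae.
- move=> [tau [ht [l [hl hVe]]]].
  have hsp := space_homothetic _ _ _ hl hV hVe.
  have tt : tau * (tau^*)%C = 1 by rewrite -sqr_normc ht expr1n.
  have t0 : tau != 0 by apply/eqP => t0; move: tt; rewrite t0 mul0r => /eqP; rewrite eq_sym oner_eq0.
  have hp1 : tau + 1 != 0.
    apply/negP; rewrite addr_eq0 => /eqP ht1; apply: (@not_space_real R (-1)).
    by rewrite rmorphN1 -ht1.
  have hm1 : tau - 1 != 0.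
    apply/negP; rewrite subr_eq0 => /eqP ht1; apply: (@not_space_real R 1).
    by rewrite rmorph1 -{2}ht1.
  have hci : (tau^*)%C = tau^-1 by apply: (mulfI t0); rewrite tt mulfV.
  exists ((tau - 1) / (tau + 1)); split; first by rewrite mulf_neq0 ?invr_eq0.
  split.
    have hc : (((tau - 1) / (tau + 1))^*)%C = - ((tau - 1) / (tau + 1)).
      rewrite rmorphM fmorphV rmorphB rmorphD rmorph1 /= hci.
      have hp1' : tau^-1 + 1 != 0.
        have -> : tau^-1 + 1 = tau^-1 * (tau + 1) by rewrite mulrDr mulVf // mulr1 addrC.
        by rewrite mulf_neq0 ?invr_eq0.
      by field; rewrite hp1 t0.
    have := addcJ ((tau - 1) / (tau + 1)); rewrite hc addrN => /esym/eqP.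
    by rewrite mulf_eq0 pnatr_eq0 /= => /eqP; case.
  exists (l * (tau + 1)); split; first by rewrite mulf_neq0.
  rewrite hVe -img_comp [X in _ = _ @` X]qspan_img mulr1.
  have -> : (tau + 1) * ((tau - 1) / (tau + 1)) = tau - 1 by rewrite mulrC divfK.
  rewrite -(qspan_change 1 tau 1 1 (-1) 1) //.
  by congr (_ @` qspan _ _); rewrite ?rmorph1 ?rmorphN1; ring.
- move=> [tau [t0 [hre [l [hl hVe]]]]].
  exists (qspan 1 tau); split; first exact: space_homothetic _ _ _ hl hV hVe.
  split; last by exists l.
  have hc : (tau^*)%C = - tau.
    by case: tau hre {t0 hVe} => a b /= ->; apply/eqP; rewrite eq_complex /= oppr0 !eqxx.
  rewrite conj_qspan conjc1 hc.
  rewrite -{1}(qspan_change 1 tau 1 0 0 (-1)) //.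
  by congr qspan; rewrite ?rmorph1 ?rmorph0 ?rmorphN1; ring.
- move=> [V' [[[u [v [hQ hV'e]]] [x [y [Vx [Vy hR]]]]] [hc [mu [hmu hVe]]]]].
  have u0 : u != 0.
    apply/eqP => u0; case: (hQ 1 0) => [|/eqP]; last by rewrite oner_eq0.
    by rewrite u0 rmorph0; ring.
  have v0 : v != 0.
    apply/eqP => v0; case: (hQ 0 1) => [|_ /eqP]; last by rewrite oner_eq0.
    by rewrite v0 rmorph0; ring.
  have Vu : V' u by rewrite hV'e; exists 1, 0; rewrite rmorph1 rmorph0; ring.
  have Vv : V' v by rewrite hV'e; exists 0, 1; rewrite rmorph1 rmorph0; ring.
  have Vuc : V' (u^*)%C by rewrite hc; exists u.
  have Vvc : V' (v^*)%C by rewrite hc; exists v.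
  move: Vuc Vvc; rewrite hV'e => -[a [b hub]] -[c [d hvc]].
  have [b0|bn0] := eqVneq b 0; last first.
    apply: (key _ _ _ _ u0 hmu _ hVe); rewrite hV'e hub -(qspan_change u v 1 0 a b).
      by congr qspan; rewrite ?rmorph1 ?rmorph0; ring.
    by rewrite mul1r mul0r subr0.
  have [c0|cn0] := eqVneq c 0; last first.
    apply: (key _ _ _ _ v0 hmu _ hVe); rewrite hV'e hvc -(qspan_change u v 0 1 c d).
      by congr qspan; rewrite ?rmorph1 ?rmorph0; ring.
    by rewrite mul1r mul0r sub0r oppr_eq0.
  have [ad|adn] := eqVneq a d; last first.
    have w0 : u + v != 0.
      apply/eqP => w0; case: (hQ 1 1) => [|/eqP]; last by rewrite oner_eq0.
      by rewrite rmorph1 !mul1r.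
    apply: (key _ _ _ _ w0 hmu _ hVe); rewrite hV'e rmorphD /= hub hvc b0 c0.
    rewrite -(qspan_change u v 1 1 a d).
      by congr qspan; rewrite ?rmorph1 ?rmorph0; ring.
    by rewrite !mul1r subr_eq0 eq_sym.
  have hz : forall z, V' z -> (z^*)%C = (((ratr a : R)%:C)%C) * z.
    rewrite hV'e => z [p [q ->]].
    by rewrite rmorphD /= !conj_ratrM hub hvc b0 c0 -ad -ratrC rmorph0; ring.
  have [hx1 hx2] := L11 _ _ (hz x Vx).
  have [hy1 hy2] := L11 _ _ (hz y Vy).
  have [a1|an1] := eqVneq (ratr a : R) 1.
    by case: (no_Rindep _ _ _ _ _ (hx1 a1) (hy1 a1) hR).
  by case: (no_Rindep _ _ _ _ _ (hx2 an1) (hy2 an1) hR).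
Qed.
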